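(* Let $R$ be a simple path in $T$ with consecutive vertices $r_1,\dots,r_m$, let $k$ be an integer with $2\le k\le m$, put $N=m-k+1$, and for $j=1,\dots,N$ let $P_j$ be the path $r_j,r_{j+1},\dots,r_{j+k-1}$. Assume all $P_j$ have the same length, i.e. $|P_j|=l$ for all $j$. Then the sequence $j\mapsto\overline{S}(P_j)$ is unimodal of ''increasing then decreasing'' type: there exists $j^*\in\{1,\dots,N\}$ such that $\overline{S}(P_1)\le\overline{S}(P_2)\le\dots\le\overline{S}(P_{j^*})$ and $\overline{S}(P_{j^*})\ge\overline{S}(P_{j^*+1})\ge\dots\ge\overline{S}(P_N)$.
   Context: Let $T=(V,E)$ be a finite tree with vertex set $V=\{v_1,\dots,v_n\}$ and positive edge lengths; $d(x,y)$ denotes the length of the unique path in $T$ between vertices $x,y$. Each vertex $v_i$ has a weight $w_i\ge 0$ with $w(T)=\sum_i w_i=1$. A path $P$ is the vertex sequence $p(1),\dots,p(k)$ of a simple path in $T$; $|P|=d(p(1),p(k))$. For $v\in V$, $p_P(v)$ denotes the unique vertex of $P$ closest to $v$. For a vertex $p$ of $P$, the branch $T_p$ (with respect to $P$) is the set of vertices $v$ with $p_P(v)=p$, and $w_{T_p}=\sum_{v_i\in T_p}w_i$. For a vertex $p$ of $P$ put $\overline{d}_P(p)=\sum_{j=1}^k w_{T_{p(j)}}\,d(p(j),p)$. Fix a speed $v_t>0$ and a constant $\overline{G}\ge0$. Define $\overline{T}_2(P)=\frac{1}{v_t}\sum_i w_i\,\overline{d}_P(p_P(v_i))$ and $\overline{S}(P)=\overline{T}_2(P)+\overline{G}$.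 *)

(* Defs.v *)
From HB Require Import structures.
From mathcomp Require Import all_boot all_order all_algebra.
Set Implicit Arguments. Unset Strict Implicit. Unset Printing Implicit Defensive.
Import Order.TTheory GRing.Theory Num.Theory.
Local Open Scope ring_scope.

Section TreeDefs.
Variables (V : finType) (R : realFieldType).

Definition is_tree (e : rel V) : Prop :=
  [/\ symmetric e, irreflexive e,
      (forall x y, connect e x y) &
      (forall x s, path e x s -> uniq (x :: s) -> (2 <= size s)%N ->
                   ~~ e (last x s) x)].

Definition edge_lengths (e : rel V) (len : V -> V -> R) : Prop :=
  (forall x y, len x y = len y x) /\ (forall x y, e x y -> 0 < len x y).

Definition walk_len (len : V -> V -> R) (x : V) (s : seq V) : R :=
  \sum_(t <- pairmap len x s) t.

Definition is_tree_dist (e : rel V) (len : V -> V -> R) (d : V -> V -> R) : Prop :=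
  forall x s, path e x s -> uniq (x :: s) -> d x (last x s) = walk_len len x s.

Definition is_path (e : rel V) (P : seq V) : Prop :=
  if P is x :: s then path e x s && uniq (x :: s) else False.

Definition plen (d : V -> V -> R) (P : seq V) : R :=
  if P is x :: s then d x (last x s) else 0.

Definition closest (d : V -> V -> R) (P : seq V) (v : V) : V :=
  foldl (fun b x => if d v x < d v b then x else b) (head v P) P.

Definition branch_w (d : V -> V -> R) (w : V -> R) (P : seq V) (p : V) : R :=
  \sum_(v | closest d P v == p) w v.

Definition dbar (d : V -> V -> R) (w : V -> R) (P : seq V) (p : V) : R :=
  \sum_(q <- P) branch_w d w P q * d q p.

Definition T2bar (d : V -> V -> R) (w : V -> R) (vt : R) (P : seq V) : R :=
  vt^-1 * \sum_(v : V) w v * dbar d w P (closest d P v).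

Definition Sbar (d : V -> V -> R) (w : V -> R) (vt G : R) (P : seq V) : R :=
  T2bar d w vt P + G.

End TreeDefs.

(* P_{j+1} (0-indexed j) : the window r_{j+1}, ..., r_{j+k} of R. *)
Definition window (T : Type) (Rs : seq T) (k j : nat) : seq T :=
  take k (drop j Rs).

(* Main.v *)
Require Import Defs.
From HB Require Import structures.
From mathcomp Require Import all_boot all_order all_algebra.
From mathcomp Require Import zify ring lra.
Set Implicit Arguments. Unset Strict Implicit. Unset Printing Implicit Defensive.
Import Order.TTheory GRing.Theory Num.Theory.
Local Open Scope ring_scope.
Definition clamp a b x := maxn a (minn x b).

Section Alg.
Variables (R : realFieldType) (V : finType) (w : V -> R) (c : V -> nat)
  (pos : nat -> R) (m : nat).
Hypothesis posmono : forall i j, (i <= j)%N -> (j < m)%N -> pos i <= pos j.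
Hypothesis wsum : \sum_v w v = 1.

Definition Qf a b := \sum_v \sum_u w v * w u *
  `|pos (clamp a b (c v)) - pos (clamp a b (c u))|.

Definition bR (b : bool) : R := (b : nat)%:R.

Section AB.
Variables (a b : nat) (L : R).
Hypothesis ab : (a < b)%N.
Hypothesis bm : (b.+1 < m)%N.
Hypothesis hLa : pos a.+1 = pos a + L.
Hypothesis hLb : pos b.+1 = pos b + L.

Lemma delta z : pos (clamp a.+1 b.+1 z) =
  pos (clamp a b z) + L * (bR (z <= a)%N + bR (b < z)%N).
Proof.
rewrite /bR; case: (leqP z a) => h1; case: (ltnP b z) => h2 /=; try lia.
- have -> : clamp a.+1 b.+1 z = a.+1 by rewrite /clamp; lia.
  have -> : clamp a b z = a by rewrite /clamp; lia.
  by rewrite hLa; ring.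
- have -> : clamp a.+1 b.+1 z = b.+1 by rewrite /clamp; lia.
  have -> : clamp a b z = b by rewrite /clamp; lia.
  by rewrite hLb; ring.
- have -> : clamp a.+1 b.+1 z = clamp a b z by rewrite /clamp; lia.
  ring.
Qed.

Lemma pointwise x y :
  `|pos (clamp a.+1 b.+1 x) - pos (clamp a.+1 b.+1 y)| -
  `|pos (clamp a b x) - pos (clamp a b y)| =
  L * ((bR (b < x)%N + bR (b < y)%N - 2 * bR (b < x)%N * bR (b < y)%N) -
       (bR (x <= a)%N + bR (y <= a)%N - 2 * bR (x <= a)%N * bR (y <= a)%N)).
Proof.
wlog: x y / (x <= y)%N => [H|xy].
  case: (leqP x y) => h; first exact: H.
  rewrite distrC [X in _ - X]distrC H; [ring | exact: ltnW].
have m1 : forall a' b', (a' <= b')%N -> (b' < m)%N -> pos (clamp a' b' x) <= pos (clamp a' b' y).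
  by move=> a' b' ha hb; apply: posmono; rewrite /clamp; lia.
rewrite distrC (distrC (pos (clamp a b x))).
rewrite !ger0_norm ?subr_ge0; try (apply: m1; lia).
rewrite !delta /bR.
case: (leqP x a) => h1; case: (ltnP b x) => h2; case: (leqP y a) => h3;
  case: (ltnP b y) => h4 /=; try lia; ring.
Qed.

Lemma pair_sum (X : V -> R) :
  \sum_v \sum_u w v * w u * (X v + X u - 2 * X v * X u) =
  2 * (\sum_u w u * X u) * (1 - \sum_u w u * X u).
Proof.
set xi := \sum_u w u * X u.
have inner : forall v, \sum_u w v * w u * (X v + X u - 2 * X v * X u) =
   w v * X v + w v * xi - 2 * (w v * X v) * xi.
  move=> v.
  rewrite (eq_bigr (fun u => (w v * X v) * w u + w v * (w u * X u) -
      (2 * (w v * X v)) * (w u * X u))); last by move=> u _; ring.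
  by rewrite sumrB big_split /= -!mulr_sumr wsum /xi; ring.
under eq_bigr => v _ do rewrite inner.
rewrite !sumrB big_split /= -!mulr_suml -mulr_sumr -/xi wsum; ring.
Qed.

Lemma Qdiff :
  Qf a.+1 b.+1 - Qf a b =
  L * (2 * (\sum_u w u * bR (b < c u)%N) * (1 - \sum_u w u * bR (b < c u)%N) -
       2 * (\sum_u w u * bR (c u <= a)%N) * (1 - \sum_u w u * bR (c u <= a)%N)).
Proof.
rewrite -!pair_sum /Qf -sumrB -sumrB mulr_sumr; apply: eq_bigr => v _.
rewrite -sumrB -sumrB mulr_sumr; apply: eq_bigr => u _.
rewrite -mulrBr pointwise; ring.
Qed.

End AB.
End Alg.

Lemma unimodal (R : realFieldType) (f s : nat -> R) N : (0 < N)%N ->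
  (forall j, s j.+1 <= s j) ->
  (forall j, (j.+1 < N)%N -> 0 <= s j -> f j <= f j.+1) ->
  (forall j, (j.+1 < N)%N -> s j <= 0 -> f j.+1 <= f j) ->
  exists2 js, (js < N)%N &
    (forall j, (j.+1 <= js)%N -> f j <= f j.+1) /\
    (forall j, (js <= j)%N -> (j.+1 < N)%N -> f j.+1 <= f j).
Proof.
move=> N0 smono hinc hdec.
pose a := fun j => s j < 0.
pose js := find a (iota 0 N.-1).
have jsle : (js <= N.-1)%N by rewrite -[X in (_ <= X)%N](size_iota 0) find_size.
exists js; first lia.
split.
  move=> j hj; apply: hinc; first lia.
  have := before_find 0%N hj; rewrite nth_iota; last by lia.
  by rewrite /a ?add0n => /negbT; rewrite -leNgt.
move=> j h1 h2; apply: hdec => //.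
have hs : has a (iota 0 N.-1) by rewrite has_find size_iota; lia.
have := nth_find 0%N hs; rewrite -/js nth_iota; last by lia.
rewrite /a ?add0n => hlt.
have mono : forall n, s (js + n)%N <= s js.
  elim=> [|n IH]; first by rewrite addn0.
  by rewrite addnS; apply: le_trans (smono _) IH.
have -> : j = (js + (j - js))%N by lia.
exact: ltW (le_lt_trans (mono _) hlt).
Qed.

Section Geo.
Variables (R : realFieldType) (V : finType) (e : rel V) (len d : V -> V -> R).
Hypothesis esym : symmetric e.
Hypothesis lsym : forall x y, len x y = len y x.
Hypothesis lpos : forall x y, e x y -> 0 < len x y.
Hypothesis dist : is_tree_dist e len d.
Hypothesis conn : forall x y, connect e x y.

Lemma wl_cons x y s : walk_len len x (y :: s) = len x y + walk_len len y s.
Proof. by rewrite /walk_len /= big_cons. Qed.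

Lemma wl_nil x : walk_len len x [::] = 0.
Proof. by rewrite /walk_len /= big_nil. Qed.

Lemma wl_cat x s1 s2 :
  walk_len len x (s1 ++ s2) = walk_len len x s1 + walk_len len (last x s1) s2.
Proof.
elim: s1 x => [|y s1 IH] x /=; first by rewrite wl_nil add0r.
by rewrite !wl_cons IH addrA.
Qed.

Lemma wl_ge0 x s : path e x s -> 0 <= walk_len len x s.
Proof.
elim: s x => [|y s IH] x /=; first by rewrite wl_nil.
case/andP=> exy ps; rewrite wl_cons addr_ge0 //; last exact: IH.
exact: ltW (lpos exy).
Qed.

Lemma wl_gt0 x y s : path e x (y :: s) -> 0 < walk_len len x (y :: s).
Proof.
move=> /= /andP[exy ps]; rewrite wl_cons ltr_wpDr //; [exact: wl_ge0 | exact: lpos].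
Qed.

Lemma d_xx x : d x x = 0.
Proof. by have := dist (s:=[::]) (x:=x) erefl erefl; rewrite wl_nil. Qed.

Lemma simple_path x y : exists s, [/\ path e x s, uniq (x :: s) & last x s = y].
Proof.
case/connectP: (conn x y) => p pp ->.
case: (shortenP pp) => p' pp' up' _; by exists p'.
Qed.

Lemma d_ge0 x y : 0 <= d x y.
Proof.
have [s [ps us <-]] := simple_path x y.
by rewrite dist //; apply: wl_ge0.
Qed.


Lemma exists_argmin (f : nat -> R) (m : nat) : (0 < m)%N ->
  exists c, (c < m)%N /\ forall i, (i < m)%N -> f c <= f i.
Proof.
elim: m => [//|m IH] _.
case: m IH => [|m] IH.
  by exists 0%N; split=> // i; rewrite ltnS leqn0 => /eqP->.
have [c [cm hc]] := IH erefl.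
case: (lerP (f c) (f m.+1)) => h.
  exists c; split; first by apply: ltnW.
  move=> i; rewrite ltnS leq_eqVlt => /orP[/eqP->//|]; exact: hc.
exists m.+1; split=> // i; rewrite ltnS leq_eqVlt => /orP[/eqP->//|/hc].
by move=> h2; apply: le_trans (ltW h) h2.
Qed.

Lemma foldl_min (T : eqType) (f : T -> R) (l : seq T) b :
  let g := fun b x => if f x < f b then x else b in
  foldl g b l \in b :: l /\ forall y, y \in b :: l -> f (foldl g b l) <= f y.
Proof.
move=> g; elim: l b => [|x l IH] b /=.
  by split=> [|y]; rewrite ?mem_head // inE => /eqP->.
have [h1 h2] := IH (g b x); split.
  move: h1; rewrite /g; case: ifP => _; rewrite !inE => /orP[->|->];
    rewrite ?orbT //.
move=> y; rewrite !inE => /orP[/eqP->|/orP[/eqP->|yl]].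
- apply: le_trans (h2 _ (mem_head _ _)) _; rewrite /g; case: ifP => // /ltW //.
- apply: le_trans (h2 _ (mem_head _ _)) _; rewrite /g; case: ifP => //.
  by rewrite ltNge => /negbFE.
- by apply: h2; rewrite inE yl orbT.
Qed.

Lemma closest_min (P : seq V) v : P != [::] ->
  closest d P v \in P /\ forall y, y \in P -> d v (closest d P v) <= d v y.
Proof.
case: P => // x P _; have [h1 h2] := foldl_min (d v) (x :: P) x.
rewrite /closest; change (head v (x :: P)) with x; split.
  by move: h1; rewrite inE => /orP[/eqP->|]; rewrite ?mem_head.
by move=> y hy; apply: h2; rewrite inE hy orbT.
Qed.

Lemma dbar_eq (w : V -> R) (P : seq V) p : uniq P -> P != [::] ->
  dbar d w P p = \sum_u w u * d (closest d P u) p.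
Proof.
move=> uP nP; rewrite /dbar /branch_w.
under eq_bigr => q _ do rewrite big_mkcond mulr_suml.
rewrite exchange_big /=; apply: eq_bigr => u _.
have [cin _] := closest_min u nP.
rewrite (bigD1_seq (closest d P u)) //= eqxx big1_seq ?addr0 // => q /andP[nq _].
by rewrite eq_sym (negbTE nq) mul0r.
Qed.

Lemma Q_eq (w : V -> R) (P : seq V) : uniq P -> P != [::] ->
  \sum_v w v * dbar d w P (closest d P v) =
  \sum_v \sum_u w v * w u * d (closest d P u) (closest d P v).
Proof.
move=> uP nP; apply: eq_bigr => v _.
by rewrite dbar_eq // mulr_sumr; apply: eq_bigr => u _; rewrite mulrA.
Qed.

Section RP.
Variables (x0 : V) (rs : seq V).
Hypothesis hp : path e x0 rs.
Hypothesis hu : uniq (x0 :: rs).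
Local Notation Rs := (x0 :: rs).
Local Notation m := (size Rs).
Definition r i := nth x0 Rs i.
Definition pos t := \sum_(i < t) len (r i) (r i.+1).

Lemma redge t : (t.+1 < m)%N -> e (r t) (r t.+1).
Proof. by move=> h; apply: (pathP x0 hp). Qed.

Lemma rinj i j : (i < m)%N -> (j < m)%N -> r i = r j -> i = j.
Proof. by move=> hi hj /eqP; rewrite /r nth_uniq // => /eqP. Qed.

Lemma posS t : pos t.+1 = pos t + len (r t) (r t.+1).
Proof. by rewrite /pos big_ord_recr. Qed.

Lemma pos_lt i j : (i < j)%N -> (j < m)%N -> pos i < pos j.
Proof.
elim: j => [//|j IH] hij hj.
rewrite posS; have hl := lpos (redge hj).
move: hij; rewrite ltnS leq_eqVlt => /orP[/eqP->|h].
  by rewrite ltrDl.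
apply: lt_trans (IH h (ltnW hj)) _; by rewrite ltrDl.
Qed.

Lemma pos_le i j : (i <= j)%N -> (j < m)%N -> pos i <= pos j.
Proof.
rewrite leq_eqVlt => /orP[/eqP->//|h hj]; exact: ltW (pos_lt h hj).
Qed.

Lemma up_path a n : (a + n < m)%N -> path e (r a) (map r (iota a.+1 n)).
Proof.
elim: n a => [//|n IH] a h /=; rewrite redge; last by lia.
by apply: IH; lia.
Qed.

Lemma up_len a n : walk_len len (r a) (map r (iota a.+1 n)) = pos (a + n) - pos a.
Proof.
elim: n a => [|n IH] a /=; first by rewrite wl_nil addn0 subrr.
by rewrite wl_cons IH posS addSnnS; ring.
Qed.

Lemma up_last a n : last (r a) (map r (iota a.+1 n)) = r (a + n).
Proof.
elim: n a => [|n IH] a /=; first by rewrite addn0.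
by rewrite IH addSnnS.
Qed.

Lemma up_uniq a n : (a + n < m)%N -> uniq (map r (iota a.+1 n)).
Proof.
move=> h; rewrite map_inj_in_uniq ?iota_uniq // => i j.
rewrite !mem_iota => hi hj; apply: rinj; lia.
Qed.

Lemma up_mem a n x : x \in map r (iota a.+1 n) ->
  exists2 j, (a < j <= a + n)%N & x = r j.
Proof.
case/mapP=> j; rewrite mem_iota => hj ->; exists j => //; lia.
Qed.

Fixpoint down a n := if n is n'.+1 then a.-1 :: down a.-1 n' else [::].

Lemma down_path a n : (n <= a)%N -> (a < m)%N -> path e (r a) (map r (down a n)).
Proof.
elim: n a => [//|n IH] a h1 h2 /=.
rewrite IH; [|lia|lia]; rewrite andbT esym.
have -> : a = a.-1.+1 by lia.
rewrite -pred_Sn; apply: redge; lia.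
Qed.

Lemma down_len a n : (n <= a)%N ->
  walk_len len (r a) (map r (down a n)) = pos a - pos (a - n).
Proof.
elim: n a => [|n IH] a h /=; first by rewrite wl_nil subn0 subrr.
rewrite wl_cons IH; last by lia.
have -> : (a - n.+1 = a.-1 - n)%N by lia.
have ea : a = a.-1.+1 by lia.
have -> : pos a = pos a.-1 + len (r a.-1) (r a) by rewrite [in LHS]ea posS -ea.
rewrite lsym; ring.
Qed.

Lemma down_last a n : (n <= a)%N -> last (r a) (map r (down a n)) = r (a - n).
Proof.
elim: n a => [|n IH] a h /=; first by rewrite subn0.
rewrite IH; last by lia.
by congr r; lia.
Qed.

Lemma down_mem a n j : (n <= a)%N -> j \in down a n -> (a - n <= j < a)%N.
Proof.
elim: n a => [//|n IH] a h /=; rewrite inE => /orP[/eqP->|/IH]; first lia.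
move=> H; have := H ltac:(lia); lia.
Qed.

Lemma down_uniq a n : (n <= a)%N -> (a < m)%N -> uniq (map r (down a n)).
Proof.
move=> h1 h2; rewrite map_inj_in_uniq.
  elim: n a h1 h2 => [//|n IH] a h1 h2 /=.
  rewrite IH; [|lia|lia]; rewrite andbT.
  by apply/negP => /down_mem H; have := H ltac:(lia); lia.
move=> i j /down_mem hi /down_mem hj; apply: rinj.
  by have := hi h1; lia.
by have := hj h1; lia.
Qed.

Lemma down_mem2 a n x : (n <= a)%N -> x \in map r (down a n) ->
  exists2 j, (a - n <= j < a)%N & x = r j.
Proof.
move=> h; case/mapP=> j /(down_mem h) hj ->; by exists j.
Qed.


Lemma key v : exists c, (c < m)%N /\
  forall i, (i < m)%N -> d v (r i) = d v (r c) + `|pos i - pos c|.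
Proof.
have [c [cm hc]] := exists_argmin (fun i => d v (r i)) (ltn0Sn (size rs)).
exists c; split => //.
have [s [ps us ls]] := simple_path v (r c).
have noR : forall y, y \in v :: s -> forall j, (j < m)%N -> y = r j -> y = r c.
  move=> y yin j jm yj; move: ps us ls; case/splitPl: yin => s1 s2 ly ps us ls.
  case: s2 ps us ls => [|z s2] ps us ls; first by rewrite cats0 in ls; rewrite -ly.
  exfalso; move: (ps); rewrite cat_path => /andP[ps1 ps2].
  have us1 : uniq (v :: s1) by move: us; rewrite -cat_cons cat_uniq => /andP[].
  have h1 := dist ps1 us1; rewrite ly yj in h1.
  have h2 := dist ps us; rewrite ls wl_cat -h1 in h2.
  have h3 := wl_gt0 ps2; have := hc j jm; rewrite /= h2; lra.
move=> i im; case: (leqP c i) => hci.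
  pose n := (i - c)%N; have ei : i = (c + n)%N by rewrite /n; lia.
  have pt : path e v (s ++ map r (iota c.+1 n)).
    by rewrite cat_path ps ls up_path //; lia.
  have ut : uniq (v :: s ++ map r (iota c.+1 n)).
    rewrite -cat_cons cat_uniq us up_uniq ?andbT; last by lia.
    apply/hasPn => x /up_mem [j hj ->]; apply/negP => /noR H.
    have := H j ltac:(lia) erefl => /rinj; lia.
  have := dist pt ut; rewrite last_cat ls up_last wl_cat ls up_len -ei.
  move=> ->; rewrite -(dist ps us) ls ger0_norm // subr_ge0; exact: pos_le.
pose n := (c - i)%N; have ei : i = (c - n)%N by rewrite /n; lia.
have pt : path e v (s ++ map r (down c n)).
  by rewrite cat_path ps ls down_path //; lia.
have ut : uniq (v :: s ++ map r (down c n)).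
  have nc : (n <= c)%N by rewrite /n; lia.
  rewrite -cat_cons cat_uniq us down_uniq ?andbT //.
  apply/hasPn => x /down_mem2 [|j hj ->]; first lia.
  apply/negP => /noR H.
  have jm : (j < m)%N by apply: ltn_trans cm; case/andP: hj.
  by have := H j jm erefl => /rinj => H2; have := H2 jm cm; lia.
have nc : (n <= c)%N by rewrite /n; lia.
have := dist pt ut; rewrite last_cat ls down_last // wl_cat ls down_len // -ei.
move=> ->; rewrite -(dist ps us) ls ler0_norm ?opprB // subr_le0; apply: pos_le => //; lia.
Qed.


Lemma d_rr i j : (i < m)%N -> (j < m)%N -> d (r i) (r j) = `|pos j - pos i|.
Proof.
move=> im jm; have [c [cm hc]] := key (r i).
have h0 := hc i im; rewrite d_xx in h0.
have h1 := d_ge0 (r i) (r c).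
have hn : `|pos i - pos c| = 0.
  apply/eqP; rewrite eq_le normr_ge0 andbT.
  by rewrite -(lerD2l (d (r i) (r c))) -h0 addr0.
have ic : i = c.
  move: hn => /eqP; rewrite normr_eq0 subr_eq0 => /eqP hpe.
  case: (ltngtP i c) => // h.
    by have := pos_lt h cm; rewrite hpe ltxx.
  by have := pos_lt h im; rewrite hpe ltxx.
by rewrite (hc j jm) -ic d_xx add0r.
Qed.

Lemma window_eq j k : (j + k <= m)%N -> window Rs k j = map r (iota j k).
Proof.
move=> h; apply: (@eq_from_nth _ x0).
  by rewrite size_map size_iota /window size_takel // size_drop; lia.
move=> i; rewrite /window size_takel ?size_drop; last by lia.
move=> ik; rewrite nth_take // nth_drop (nth_map 0%N) ?size_iota //.
by rewrite nth_iota.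
Qed.


Lemma absd_lt c cl i : (c < m)%N -> (cl < m)%N -> (i < m)%N ->
  ((c <= cl < i)%N \/ (i < cl <= c)%N) ->
  `|pos cl - pos c| < `|pos i - pos c|.
Proof.
move=> cm clm im [/andP[h1 h2]|/andP[h1 h2]].
  have p1 : pos c <= pos cl by apply: pos_le.
  have p2 : pos cl < pos i by apply: pos_lt.
  rewrite (ger0_norm (x := pos cl - pos c)) ?subr_ge0 //.
  rewrite (ger0_norm (x := pos i - pos c)) ?subr_ge0; last by apply: ltW (le_lt_trans p1 p2).
  by rewrite ltrD2r.
have p1 : pos cl <= pos c by apply: pos_le.
have p2 : pos i < pos cl by apply: pos_lt.
rewrite (ler0_norm (x := pos cl - pos c)) ?subr_le0 //.
rewrite (ler0_norm (x := pos i - pos c)) ?subr_le0; last by apply: ltW (lt_le_trans p2 p1).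
by rewrite ltrN2 ltrD2r.
Qed.

Lemma closest_window j k v c : (0 < k)%N -> (j + k <= m)%N -> (c < m)%N ->
  (forall i, (i < m)%N -> d v (r i) = d v (r c) + `|pos i - pos c|) ->
  closest d (map r (iota j k)) v = r (clamp j (j + k.-1) c).
Proof.
move=> k0 jk cm hc.
have [h1 h2] := @closest_min (map r (iota j k)) v
  ltac:(by case: k k0 {jk}).
set cl := clamp j (j + k.-1) c.
have clin : r cl \in map r (iota j k).
  by apply: map_f; rewrite mem_iota /cl /clamp; lia.
have := h2 _ clin; case/mapP: h1 => i; rewrite mem_iota => hi ->.
have im : (i < m)%N by lia.
have clm : (cl < m)%N by rewrite /cl /clamp; lia.
case: (eqVneq i cl) => [->//|ne].
rewrite (hc i im) (hc cl clm) lerD2l => hle; exfalso.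
have : `|pos cl - pos c| < `|pos i - pos c|.
  apply: absd_lt => //; move: ne; rewrite /cl /clamp; lia.
by rewrite ltNge hle.
Qed.

Lemma plen_window j k : (0 < k)%N -> (j + k <= m)%N ->
  plen d (map r (iota j k)) = pos (j + k.-1) - pos j.
Proof.
case: k => [//|k] _ h /=.
rewrite up_last d_rr; try lia.
by rewrite ger0_norm // subr_ge0; apply: pos_le; lia.
Qed.

Lemma bR_le (b1 b2 : bool) : (b1 -> b2) -> bR R b1 <= bR R b2.
Proof. case: b1; case: b2 => //= h; rewrite /bR /= ?lexx ?ler01 //; by have := h isT. Qed.

Variables (w : V -> R) (vt G : R) (k : nat) (l : R).
Hypothesis wge0 : forall v, 0 <= w v.
Hypothesis wsum : \sum_v w v = 1.
Hypothesis vt0 : 0 < vt.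
Hypothesis k2 : (2 <= k)%N.
Hypothesis km : (k <= m)%N.
Hypothesis hl : forall j, (j < m - k + 1)%N -> plen d (window Rs k j) = l.

Lemma main_geo :
  exists2 js : nat, (js < m - k + 1)%N &
    (forall j, (j.+1 <= js)%N ->
       Sbar d w vt G (window Rs k j) <= Sbar d w vt G (window Rs k j.+1)) /\
    (forall j, (js <= j)%N -> (j.+1 < m - k + 1)%N ->
       Sbar d w vt G (window Rs k j.+1) <= Sbar d w vt G (window Rs k j)).
Proof.
pose Pk v c := (c < m)%N && [forall i : 'I_m, d v (r i) == d v (r c) + `|pos i - pos c|].
have kv : forall v, exists c, Pk v c.
  move=> v; have [c [cm hc]] := key v; exists c; rewrite /Pk cm /=.
  by apply/forallP => i; rewrite hc.
pose cf v := xchoose (kv v).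
have hc : forall v, (cf v < m)%N /\
    forall i, (i < m)%N -> d v (r i) = d v (r (cf v)) + `|pos i - pos (cf v)|.
  move=> v; have /andP[h1 /forallP h2] := xchooseP (kv v); split => // i im.
  by have /eqP := h2 (Ordinal im).
have Sf : forall j, (j + k <= m)%N ->
    Sbar d w vt G (window Rs k j) = vt^-1 * Qf w cf pos j (j + k.-1) + G.
  move=> j jk; rewrite /Sbar /T2bar window_eq // Q_eq; first last.
  - by move: k2; case: (k) => //.
  - rewrite map_inj_in_uniq ?iota_uniq // => x y; rewrite !mem_iota => hx hy.
    by apply: rinj; lia.
  congr (_ * _ + _); apply: eq_bigr => v _; apply: eq_bigr => u _.
  have [cvm hcv] := hc v; have [cum hcu] := hc u.
  rewrite (closest_window _ _ cvm hcv) ?(closest_window _ _ cum hcu); try lia.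
  by rewrite d_rr // /clamp; lia.
pose al j := \sum_u w u * bR R (cf u <= j)%N.
pose be j := \sum_u w u * bR R (j + k.-1 < cf u)%N.
have pm : forall i j, (i <= j)%N -> (j < m)%N -> pos i <= pos j.
  by move=> i j h1 h2; apply: pos_le.
have E : forall j, (j.+1 < m - k + 1)%N ->
  Sbar d w vt G (window Rs k j.+1) - Sbar d w vt G (window Rs k j) =
  vt^-1 * (2 * (pos j.+1 - pos j) * (be j - al j) * (1 - al j - be j)).
  move=> j hj; have jk1 : (j.+1 + k <= m)%N by lia.
  have h1 := hl (j := j) ltac:(lia); have h2 := hl (j := j.+1) ltac:(lia).
  rewrite window_eq ?plen_window in h1; try lia.
  rewrite window_eq ?plen_window in h2; try lia.
  rewrite (Sf j.+1 jk1) (Sf j); last by lia.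
  have ee : (j.+1 + k.-1 = (j + k.-1).+1)%N by lia.
  rewrite ee in h2 *.
  have hLb : pos (j + k.-1).+1 = pos (j + k.-1) + (pos j.+1 - pos j) by lra.
  have hLa : pos j.+1 = pos j + (pos j.+1 - pos j) by ring.
  rewrite (_ : vt^-1 * Qf w cf pos j.+1 (j + k.-1).+1 + G -
     (vt^-1 * Qf w cf pos j (j + k.-1) + G) =
     vt^-1 * (Qf w cf pos j.+1 (j + k.-1).+1 - Qf w cf pos j (j + k.-1))); last by ring.
  rewrite (@Qdiff _ _ w cf pos m pm wsum j (j + k.-1) (pos j.+1 - pos j)) //; try lia.
  rewrite /al /be; ring.
have bT : bR R true = 1 by rewrite /bR /= mulr1n.
have bF : bR R false = 0 by rewrite /bR /= mulr0n.
have Lge : forall j, (j.+1 < m)%N -> 0 <= pos j.+1 - pos j.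
  by move=> j hj; rewrite posS addrAC subrr add0r; apply: ltW; apply: lpos; apply: redge.
have Mge : forall j, 0 <= 1 - al j - be j.
  move=> j; rewrite -wsum /al /be -!sumrB; apply: sumr_ge0 => u _.
  rewrite (_ : w u - _ - _ = w u * (1 - bR R (cf u <= j)%N - bR R (j + k.-1 < cf u)%N));
    last by ring.
  apply: mulr_ge0 => //.
  case: (leqP (cf u) j) => h1; case: (ltnP (j + k.-1) (cf u)) => h2; try lia;
    rewrite ?bT ?bF; lra.
have vi : 0 <= vt^-1 by rewrite invr_ge0; apply: ltW.
apply: (@unimodal _ (fun j => Sbar d w vt G (window Rs k j)) (fun j => be j - al j)).
- lia.
- move=> j; apply: lerB.
    apply: ler_sum => u _; apply: ler_wpM2l => //; apply: bR_le; lia.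
  apply: ler_sum => u _; apply: ler_wpM2l => //; apply: bR_le; lia.
- move=> j hj hs; rewrite -subr_ge0 E //; apply: mulr_ge0 => //.
  apply: mulr_ge0 => //; apply: mulr_ge0 => //; apply: mulr_ge0 => //.
  by apply: Lge; lia.
- move=> j hj hs; rewrite -subr_ge0 -opprB E // oppr_ge0.
  apply: mulr_ge0_le0 => //; apply: mulr_le0_ge0 => //.
  apply: mulr_ge0_le0 => //; apply: mulr_ge0 => //.
  by apply: Lge; lia.
Qed.

End RP.

End Geo.

(* Windows are 0-indexed: P_{j+1} = window Rs k j for j < N = m - k + 1. *)
Theorem lemma4 (R : realFieldType) (V : finType) (e : rel V)
    (len : V -> V -> R) (d : V -> V -> R) (w : V -> R) (vt G : R)
    (Rs : seq V) (k : nat) (l : R) :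
  is_tree e -> edge_lengths e len -> is_tree_dist e len d ->
  (forall v, 0 <= w v) -> \sum_(v : V) w v = 1 ->
  0 < vt -> 0 <= G ->
  is_path e Rs ->
  (2 <= k)%N -> (k <= size Rs)%N ->
  (forall j, (j < size Rs - k + 1)%N -> plen d (window Rs k j) = l) ->
  exists2 js : nat, (js < size Rs - k + 1)%N &
    (forall j, (j.+1 <= js)%N ->
       Sbar d w vt G (window Rs k j) <= Sbar d w vt G (window Rs k j.+1)) /\
    (forall j, (js <= j)%N -> (j.+1 < size Rs - k + 1)%N ->
       Sbar d w vt G (window Rs k j.+1) <= Sbar d w vt G (window Rs k j)).
Proof.
move=> [esym _ conn _] [lsym lpos] dist wge0 wsum vt0 G0 hP k2 km hl.
case: Rs hP km hl => [//|x0 rs] /andP[hp hu] km hl.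
exact: (main_geo esym lsym lpos dist conn hp hu G wge0 wsum vt0 k2 km hl).
Qed.
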